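(* Let $T:X\to Y$ be a bijective linear operator between Archimedean vector lattices, and assume that $X$ has sufficiently many components. Then $T$ is disjointness preserving if and only if $T^{-1}$ satisfies condition $(\beta)$.
   Context: All vector lattices are Archimedean. For a subset $A$ of a vector lattice $X$, $A^d=\{x\in X: |x|\wedge|a|=0 \text{ for all } a\in A\}$ and $A^{dd}=(A^d)^d$. For $a,b\in X$ we write $a\lhd b$ if $\{a\}^{dd}\subseteq\{b\}^{dd}$. A linear operator $S$ satisfies condition $(\beta)$ if $Sa\lhd Sb$ whenever $a\lhd b$. A linear operator is disjointness preserving if it maps disjoint elements to disjoint elements. An element $x'$ is a component of $x$ if $|x'|\wedge|x-x'|=0$. A vector lattice $X$ has sufficiently many components if whenever $x,u\in X$ with $x\notin\{u\}^{dd}$, there exists a nonzero component $x'$ of $x$ with $|x'|\wedge|u|=0$. *)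

(* Defs.v *)
From HB Require Import structures.
From mathcomp Require Import all_boot all_order all_algebra.
From mathcomp Require Import reals.
Set Implicit Arguments. Unset Strict Implicit. Unset Printing Implicit Defensive.
Import Order.TTheory GRing.Theory Num.Theory.
Local Open Scope ring_scope.

Record archVL (R : realType) := ArchVL {
  avl_sort :> lmodType R;
  avl_le : avl_sort -> avl_sort -> Prop;
  avl_sup : avl_sort -> avl_sort -> avl_sort;
  avl_le_refl : forall x, avl_le x x;
  avl_le_anti : forall x y, avl_le x y -> avl_le y x -> x = y;
  avl_le_trans : forall x y z, avl_le x y -> avl_le y z -> avl_le x z;
  avl_le_add : forall x y z, avl_le x y -> avl_le (x + z) (y + z);
  avl_le_scale : forall (a : R) x, 0 <= a -> avl_le 0 x -> avl_le 0 (a *: x);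
  avl_sup_l : forall x y, avl_le x (avl_sup x y);
  avl_sup_r : forall x y, avl_le y (avl_sup x y);
  avl_sup_least : forall x y z, avl_le x z -> avl_le y z -> avl_le (avl_sup x y) z;
  avl_archimedean : forall x y : avl_sort,
      (forall n : nat, avl_le (n%:R *: x) y) -> avl_le x 0
}.

Section VLDefs.
Variables (R : realType) (X : archVL R).

Definition vl_inf (x y : X) : X := - avl_sup (- x) (- y).
Definition vl_abs (x : X) : X := avl_sup x (- x).

Definition vl_disjoint (x y : X) : Prop := vl_inf (vl_abs x) (vl_abs y) = 0.

Definition vl_dcomp (A : X -> Prop) : X -> Prop :=
  fun x => forall a, A a -> vl_disjoint x a.

Definition vl_band (a : X) : X -> Prop :=
  vl_dcomp (vl_dcomp (fun z => z = a)).

Definition vl_lhd (a b : X) : Prop := forall x, vl_band a x -> vl_band b x.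

Definition vl_component (x' x : X) : Prop := vl_disjoint x' (x - x').

Definition sufficiently_many_components : Prop :=
  forall x u : X, ~ vl_band u x ->
    exists x' : X, x' <> 0 /\ vl_component x' x /\ vl_disjoint x' u.
End VLDefs.

Definition disjointness_preserving (R : realType) (X Y : archVL R)
  (S : X -> Y) : Prop :=
  forall x y : X, vl_disjoint x y -> vl_disjoint (S x) (S y).

Definition condition_beta (R : realType) (X Y : archVL R) (S : X -> Y) : Prop :=
  forall a b : X, vl_lhd a b -> vl_lhd (S a) (S b).

(* Main.v *)
Require Import Defs.
From mathcomp Require Import all_boot all_order all_algebra.
From mathcomp Require Import reals.
From Stdlib Require Import Classical.
Set Implicit Arguments. Unset Strict Implicit. Unset Printing Implicit Defensive.
Import Order.TTheory GRing.Theory Num.Theory.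
Local Open Scope ring_scope.

Section VLFacts.
Variables (R : realType) (X : archVL R).
Local Notation le := (@avl_le R X).
Local Notation sup := (@avl_sup R X).
Local Notation inf := (@vl_inf R X).
Local Notation abs := (@vl_abs R X).

Lemma le_addl (x y z : X) : le x y -> le (z + x) (z + y).
Proof. by move=> h; rewrite ![z + _]addrC; apply: avl_le_add. Qed.

Lemma le_trans' (x y z : X) : le x y -> le y z -> le x z.
Proof. exact: avl_le_trans. Qed.

Lemma le_add2 (a b c d : X) : le a b -> le c d -> le (a + c) (b + d).
Proof.
move=> h1 h2; apply: (le_trans' (avl_le_add c h1)); exact: le_addl.
Qed.

Lemma le_opp (x y : X) : le x y -> le (- y) (- x).
Proof.
move=> h; have := avl_le_add (- x - y) h.
have -> : x + (- x - y) = - y by rewrite addrA subrr add0r.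
by have -> : y + (- x - y) = - x by rewrite addrC -addrA addNr addr0.
Qed.

Lemma le_opp' (x y : X) : le (- y) (- x) -> le x y.
Proof. by move/le_opp; rewrite !opprK. Qed.

Lemma sup_comm (x y : X) : sup x y = sup y x.
Proof.
by apply: avl_le_anti; apply: avl_sup_least;
  (apply: avl_sup_l || apply: avl_sup_r).
Qed.

Lemma sup_mono (x x' y y' : X) : le x x' -> le y y' -> le (sup x y) (sup x' y').
Proof.
move=> h1 h2; apply: avl_sup_least.
  exact: le_trans' h1 (avl_sup_l _ _).
exact: le_trans' h2 (avl_sup_r _ _).
Qed.

Lemma sup_transl (x y c : X) : sup (x + c) (y + c) = sup x y + c.
Proof.
apply: avl_le_anti.
  by apply: avl_sup_least; apply: avl_le_add;
    (apply: avl_sup_l || apply: avl_sup_r).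
have h : le (sup x y) (sup (x + c) (y + c) - c).
  apply: avl_sup_least.
    by rewrite -{1}(addrK c x); apply: avl_le_add; apply: avl_sup_l.
  by rewrite -{1}(addrK c y); apply: avl_le_add; apply: avl_sup_r.
by have := avl_le_add c h; rewrite subrK.
Qed.

Lemma inf_l (x y : X) : le (inf x y) x.
Proof. by apply: le_opp'; rewrite /vl_inf opprK; apply: avl_sup_l. Qed.

Lemma inf_r (x y : X) : le (inf x y) y.
Proof. by apply: le_opp'; rewrite /vl_inf opprK; apply: avl_sup_r. Qed.

Lemma inf_greatest (x y z : X) : le z x -> le z y -> le z (inf x y).
Proof.
move=> h1 h2; apply: le_opp'; rewrite /vl_inf opprK.
by apply: avl_sup_least; apply: le_opp.
Qed.

Lemma inf_comm (x y : X) : inf x y = inf y x.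
Proof. by rewrite /vl_inf sup_comm. Qed.

Lemma inf_mono (a a' b b' : X) : le a a' -> le b b' -> le (inf a b) (inf a' b').
Proof.
move=> h1 h2; apply: inf_greatest.
  exact: le_trans' (inf_l _ _) h1.
exact: le_trans' (inf_r _ _) h2.
Qed.

Lemma half_double (v : X) : (2%:R^-1 : R) *: (v + v) = v.
Proof.
have -> : v + v = (2%:R : R) *: v by rewrite scaler_nat mulr2n.
by rewrite scalerA mulVf ?scale1r // pnatr_eq0.
Qed.

Lemma abs_ge0 (x : X) : le 0 (abs x).
Proof.
have h : le 0 (abs x + abs x).
  have := le_add2 (avl_sup_l x (- x)) (avl_sup_r x (- x)).
  by rewrite subrr.
have := avl_le_scale (a := (2%:R^-1 : R)) _ h.
rewrite half_double; apply; by rewrite invr_ge0 ler0n.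
Qed.

Lemma x_le_abs (x : X) : le x (abs x).
Proof. exact: avl_sup_l. Qed.

Lemma nx_le_abs (x : X) : le (- x) (abs x).
Proof. exact: avl_sup_r. Qed.

Lemma abs_of_ge0 (z : X) : le 0 z -> abs z = z.
Proof.
move=> h; apply: avl_le_anti; last exact: x_le_abs.
apply: avl_sup_least; first exact: avl_le_refl.
have h2 := le_opp h; rewrite oppr0 in h2; exact: le_trans' h2 h.
Qed.

Lemma abs_opp (x : X) : abs (- x) = abs x.
Proof. by rewrite /vl_abs opprK sup_comm. Qed.

Lemma abs_eq0 (x : X) : abs x = 0 -> x = 0.
Proof.
move=> h; apply: avl_le_anti.
  by rewrite -h; apply: x_le_abs.
apply: le_opp'; rewrite oppr0 -h; exact: nx_le_abs.
Qed.

Lemma inf_idem (x : X) : inf x x = x.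
Proof.
rewrite /vl_inf.
have -> : sup (- x) (- x) = - x.
  apply: avl_le_anti; last exact: avl_sup_l.
  by apply: avl_sup_least; apply: avl_le_refl.
by rewrite opprK.
Qed.

Lemma disjoint_sym (x y : X) : vl_disjoint x y -> vl_disjoint y x.
Proof. by rewrite /vl_disjoint inf_comm. Qed.

Lemma disjoint_self (x : X) : vl_disjoint x x -> x = 0.
Proof. by rewrite /vl_disjoint inf_idem; apply: abs_eq0. Qed.

Lemma inf_ge0 (a b : X) : le 0 a -> le 0 b -> le 0 (inf a b).
Proof. exact: inf_greatest. Qed.

Lemma abs_triangle (a c : X) : le (abs (a + c)) (abs a + abs c).
Proof.
apply: avl_sup_least; first by apply: le_add2; apply: x_le_abs.
rewrite opprD; by apply: le_add2; apply: nx_le_abs.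
Qed.

Lemma inf_subadd (u v w : X) : le 0 u -> le 0 v -> le 0 w ->
  le (inf u (v + w)) (inf u v + inf u w).
Proof.
move=> hu hv hw; set t := inf u (v + w).
suff h : le (t - inf u v) (inf u w).
  by have := avl_le_add (inf u v) h; rewrite subrK addrC.
have -> : t - inf u v = sup (- u + t) (- v + t).
  by rewrite sup_transl /vl_inf opprK addrC.
apply: avl_sup_least.
  apply: (le_trans' (y := 0)); last exact: inf_ge0.
  rewrite -(addNr u); apply: le_addl; exact: inf_l.
apply: inf_greatest.
  rewrite -(add0r u); apply: le_add2; last exact: inf_l.
  by have := le_opp hv; rewrite oppr0.
have -> : w = - v + (v + w) by rewrite addrA addNr add0r.
apply: le_addl; exact: inf_r.
Qed.

Lemma disjoint_add (y a c : X) :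
  vl_disjoint y a -> vl_disjoint y c -> vl_disjoint y (a + c).
Proof.
rewrite /vl_disjoint => h1 h2; apply: avl_le_anti; last first.
  by apply: inf_ge0; apply: abs_ge0.
apply: (le_trans' (y := inf (abs y) (abs a + abs c))).
  by apply: inf_mono; [apply: avl_le_refl | apply: abs_triangle].
rewrite -(addr0 0) -{1}h1 -h2; apply: inf_subadd; exact: abs_ge0.
Qed.

Lemma disjoint_opp (y c : X) : vl_disjoint y c -> vl_disjoint y (- c).
Proof. by rewrite /vl_disjoint abs_opp. Qed.

Lemma band_of_le (a z : X) : le 0 z -> le z (abs a) -> vl_band a z.
Proof.
move=> h0 h1 w Hw; have := Hw a erefl; rewrite /vl_disjoint => Hwa.
rewrite abs_of_ge0 //; apply: avl_le_anti; last first.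
  by apply: inf_ge0 => //; apply: abs_ge0.
rewrite -Hwa inf_comm; apply: inf_mono => //; exact: avl_le_refl.
Qed.

Lemma band_self (a : X) : vl_band a a.
Proof. move=> w Hw; apply: disjoint_sym; exact: Hw. Qed.

Lemma band_lhd (u x : X) : vl_band u x -> vl_lhd x u.
Proof.
move=> hux z hz w Hw; apply: hz => a' ->.
apply: disjoint_sym; exact: hux.
Qed.

End VLFacts.

Theorem theorem3p4 (R : realType) (X Y : archVL R) (T : X -> Y)
  (Tinv : Y -> X)
  (hT : linear T) (hTl : cancel T Tinv) (hTr : cancel Tinv T)
  (hX : sufficiently_many_components X) :
  disjointness_preserving T <-> condition_beta Tinv.
Proof.
have hB := zmod_morphism_linear hT.
have T0 : T 0 = 0 by rewrite -(subrr 0) hB subrr.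
split.
- move=> DP a b Hab.
  apply: band_lhd.
  case: (classic (vl_band (Tinv b) (Tinv a))) => // hn.
  have [x' [nz [comp dis]]] := hX _ _ hn.
  set p := T x'.
  have h1 : vl_disjoint p (a - p) by have := DP _ _ comp; rewrite hB hTr.
  have h2 : vl_disjoint p b by have := DP _ _ dis; rewrite hTr.
  have h3 : vl_disjoint a p.
    exact: (Hab a (@band_self _ _ a) p (fun a' e => eq_ind_r _ h2 e)).
  have h4 : vl_disjoint p (a + - (a - p)).
    apply: disjoint_add; first exact: disjoint_sym.
    exact: disjoint_opp.
  have : p = 0 by apply: disjoint_self; move: h4; rewrite opprB addrC subrK.
  move=> hp; exfalso; apply: nz; by rewrite -(hTl x') -/p hp -T0 hTl.
- move=> Hb x y Hxy.
  set a := T x; set b := T y.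
  rewrite /vl_disjoint.
  set z := vl_inf (vl_abs a) (vl_abs b).
  have z0 : avl_le 0 z by apply: inf_ge0; apply: abs_ge0.
  have hza : vl_lhd z a by apply: band_lhd; apply: band_of_le => //; apply: inf_l.
  have hzb : vl_lhd z b by apply: band_lhd; apply: band_of_le => //; apply: inf_r.
  have ha := Hb _ _ hza; have hb := Hb _ _ hzb.
  rewrite /a /b !hTl in ha hb.
  set c := Tinv z in ha hb.
  have cx := ha c (@band_self _ _ c); have cy := hb c (@band_self _ _ c).
  have dcy : vl_disjoint c y.
    apply: cx => a' ->; exact: disjoint_sym.
  have c0 : c = 0 by apply: disjoint_self; apply: cy => a' ->.
  by rewrite -(hTr z) -/c c0 T0.
Qed.
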